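(* Let $\ell,m,n$ be positive integers with $\ell<n$, $m<n$, $\gcd(m,n)=1$. Then $\ell^+$ equals the number of $L$'s in $\hat{\mathcal{X}}$, $\ell^-$ equals the number of $L$'s in $\hat{\mathcal{Y}}$, and $\ell^++\ell^-=\ell$.
   Context: $\mathcal{S}=\mathcal{F}[\ell,m,n]$ is the $n$-periodic sequence with $\mathcal{S}_i=L$ if $im\bmod n<\ell$ and $R$ otherwise. $d\in\{1,\dots,n-1\}$ is the inverse of $m$ mod $n$. $\hat{\mathcal{X}}=\mathcal{S}_0\cdots\mathcal{S}_{n-d-1}$ and $\hat{\mathcal{Y}}=\mathcal{S}_{n-d}\cdots\mathcal{S}_{n-1}$. The left and right Farey roots of $\frac mn$ are the fractions $\frac{m^-}{n^-}<\frac{m^+}{n^+}$ with $m^\pm\ge0$, $n^\pm\ge1$, $m^-+m^+=m$, $n^-+n^+=n$, $m^+n^--m^-n^+=1$; $\ell^+=\lceil\ell n^+/n\rceil$ and $\ell^-=\lfloor\ell n^-/n\rfloor$. *)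

(* Defs.v *)
From mathcomp Require Import all_boot.
Set Implicit Arguments. Unset Strict Implicit. Unset Printing Implicit Defensive.

Inductive letter := L | R.

Definition is_L (c : letter) : bool := if c is L then true else false.

Definition F (l m n : nat) (i : nat) : letter :=
  if (i * m) %% n < l then L else R.

Definition Xhat (l m n d : nat) : seq letter :=
  [seq F l m n i | i <- iota 0 (n - d)].
Definition Yhat (l m n d : nat) : seq letter :=
  [seq F l m n i | i <- iota (n - d) d].

Definition countL (w : seq letter) : nat := count is_L w.

Definition ceil_div (a b : nat) : nat := (a + b - 1) %/ b.

(* (mm, nm) / (mp, np) are the left and right Farey roots of m/n:
   m^-/n^- < m^+/n^+, m^pm >= 0, n^pm >= 1, m^- + m^+ = m, n^- + n^+ = n,
   m^+ n^- - m^- n^+ = 1. *)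
Definition farey_roots (m n mm nm mp np : nat) : Prop :=
  [/\ 1 <= nm, 1 <= np, mm * np < mp * nm, mm + mp = m &
      nm + np = n /\ mp * nm = mm * np + 1].

(* Main.v *)
Require Import Defs.
From mathcomp Require Import all_boot.
From mathcomp Require Import zify.

Lemma count_lt_iota0 c k : count (fun x => x < c) (iota 0 k) = minn c k.
Proof.
elim: k => [|k IH]; first by rewrite minn0.
rewrite -addn1 iotaD count_cat /= add0n IH.
case: (ltnP k c) => hk /=; lia.
Qed.

Lemma count_lt_iota c k : c <= k -> count (fun x => x < c) (iota 0 k) = c.
Proof. move=> h; rewrite count_lt_iota0; lia. Qed.

Lemma perm_of (s1 s2 : seq nat) :
  uniq s1 -> uniq s2 -> {subset s1 <= s2} -> size s2 <= size s1 -> perm_eq s1 s2.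
Proof.
move=> u1 u2 sub sz; apply: uniq_perm => //.
by case: (uniq_min_size u1 sub sz).
Qed.

Lemma uniq_mulmod n m d k : 0 < n -> d * m = 1 %[mod n] -> k <= n ->
  uniq [seq (i * m) %% n | i <- iota 0 k].
Proof.
move=> n0 hd hk; rewrite map_inj_in_uniq ?iota_uniq //.
move=> i j; rewrite !mem_iota !add0n => /andP[_ hi] /andP[_ hj] e.
have : (i * m * d) %% n = (j * m * d) %% n by rewrite -modnMml e modnMml.
rewrite -!mulnA [m * d]mulnC -(modnMmr i) -(modnMmr j) hd !modnMmr !muln1.
rewrite !modn_small //; lia.
Qed.

Lemma count_full l m n d : 0 < n -> l <= n -> d * m = 1 %[mod n] ->
  count (fun i => (i * m) %% n < l) (iota 0 n) = l.
Proof.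
move=> n0 ln hd.
have p : perm_eq [seq (i * m) %% n | i <- iota 0 n] (iota 0 n).
  apply: perm_of.
  - exact: (uniq_mulmod _ _ _ _ n0 hd (leqnn n)).
  - exact: iota_uniq.
  - by move=> x /mapP[i _ ->]; rewrite mem_iota add0n ltn_mod n0.
  - by rewrite size_map.
have := permP p (fun x => x < l); rewrite count_map => ->.
exact: count_lt_iota.
Qed.

Lemma key n m mp np i : 0 < np -> np < n -> n * mp = m * np + 1 -> i < np ->
  (i * m) %% n = n * ((i * mp) %% np) %/ np.
Proof.
move=> np0 npn e hi.
have n0 : 0 < n by lia.
set k := (i * mp) %% np. set v := (i * m) %% n.
have hk : k < np by rewrite ltn_mod.
have hv : v < n by rewrite ltn_mod.
have e1 := divn_eq (i * mp) np. have e2 := divn_eq (i * m) n.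
fold k in e1; fold v in e2.
set q := (i * mp) %/ np in e1. set t := (i * m) %/ n in e2.
have e3 : i * (n * mp) = i * (m * np + 1) by rewrite e.
have e5 : q * (n * np) + n * k = t * (n * np) + (v * np + i).
  have : n * (i * mp) = (i * m) * np + i.
    by rewrite mulnCA e3 mulnDr muln1 mulnA.
  rewrite e1 e2 mulnDr mulnDl => H.
  by rewrite (mulnCA q n np) H mulnA addnA.
have hnk : n * k < n * np by rewrite ltn_pmul2l.
have hvn : v * np + i < n * np.
  have : v * np + np <= n * np by rewrite -mulSnr leq_mul2r hv orbT.
  lia.
have : n * k = v * np + i.
  case: (ltngtP q t) => h.
  - have : q * (n * np) + n * np <= t * (n * np) by rewrite -mulSnr leq_mul2r h orbT.
    lia.
  - have : t * (n * np) + n * np <= q * (n * np) by rewrite -mulSnr leq_mul2r h orbT.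
    lia.
  - subst q. lia.
move=> ->. by rewrite divnMDl // divn_small // addn0.
Qed.

Lemma fmono n np a b : 0 < np -> np <= n -> a < b -> n * a %/ np < n * b %/ np.
Proof.
move=> np0 npn ab.
have h1 : n * a + 1 * np <= n * b.
  have : n * a + n <= n * b by rewrite -mulnSr leq_mul2l ab orbT.
  lia.
have := leq_div2r np h1. by rewrite divnDMl // addn1.
Qed.

Lemma countX l m n d mp np : 0 < np -> np < n -> n * mp = m * np + 1 -> l <= n ->
  d * m = 1 %[mod n] ->
  count (fun i => (i * m) %% n < l) (iota 0 np) = (l * np + n - 1) %/ n.
Proof.
move=> np0 npn e ln hd.
have n0 : 0 < n by lia.
have p : perm_eq [seq (i * m) %% n | i <- iota 0 np]
                 [seq n * k %/ np | k <- iota 0 np].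
  apply: perm_of.
  - exact: (uniq_mulmod _ _ _ _ n0 hd (ltnW npn)).
  - rewrite map_inj_in_uniq ?iota_uniq // => a b _ _ eab.
    case: (ltngtP a b) => h //.
    + by have := fmono _ _ _ _ np0 (ltnW npn) h; rewrite eab ltnn.
    + by have := fmono _ _ _ _ np0 (ltnW npn) h; rewrite eab ltnn.
  - move=> x /mapP[i]; rewrite mem_iota add0n => /andP[_ hi] ->.
    rewrite (key _ _ _ _ _ np0 npn e hi); apply: map_f.
    by rewrite mem_iota add0n ltn_mod.
  - by rewrite !size_map.
have := permP p (fun x => x < l); rewrite !count_map => ->.
have c_le : (l * np + n - 1) %/ n <= np.
  rewrite -ltnS ltn_divLR //.
  have : l * np <= n * np by rewrite leq_mul2r ln orbT.
  rewrite mulSn. lia.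
rewrite -(count_lt_iota _ _ c_le); apply: eq_count => k /=.
rewrite ltn_divLR // -[k < _]/(k.+1 <= _) leq_divRL // mulSn. lia.
Qed.

Lemma arith a b n l : 0 < n -> a + b = l * n ->
  (a + n - 1) %/ n + b %/ n = l.
Proof.
move=> n0 hl.
have ha := divn_eq a n; have hb := divn_eq b n.
have hra := ltn_mod a n; have hrb := ltn_mod b n.
move: ha hb hra hrb.
set qa := a %/ n; set ra := a %% n; set qb := b %/ n; set rb := b %% n.
move=> ha hb hra hrb.
have hc : (a + n - 1) %/ n = qa + (ra > 0).
  have -> : a + n - 1 = (ra + n - 1) + qa * n by lia.
  rewrite divnDMl // addnC; congr (_ + _).
  case: (posnP ra) => r0.
    rewrite r0 add0n divn_small //; lia.
  have -> : ra + n - 1 = (ra - 1) + 1 * n by lia.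
  by rewrite divnDMl // divn_small //; lia.
rewrite hc.
case: (ltngtP (qa + qb) l) => h.
- case: (ltngtP (qa + qb + 1) l) => h2.
  + have : (qa + qb + 2) * n <= l * n by rewrite leq_mul2r; apply/orP; right; lia.
    rewrite !mulnDl. lia.
  + lia.
  + have : (qa + qb + 1) * n = l * n by rewrite h2.
    rewrite !mulnDl => h3.
    have : 0 < ra by lia.
    move=> ->; lia.
- have : (l + 1) * n <= (qa + qb) * n by rewrite leq_mul2r; apply/orP; right; lia.
  rewrite !mulnDl. lia.
- have : (qa + qb) * n = l * n by rewrite h.
  rewrite !mulnDl => h3.
  have -> : ra = 0 by lia.
  lia.
Qed.

Theorem lemma3p7 (l m n d mm nm mp np : nat) :
  0 < l -> 0 < m -> l < n -> m < n -> coprime m n ->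
  1 <= d <= n - 1 -> d * m = 1 %[mod n] ->
  farey_roots m n mm nm mp np ->
  let lplus := ceil_div (l * np) n in
  let lminus := (l * nm) %/ n in
  [/\ lplus = countL (Xhat l m n d),
      lminus = countL (Yhat l m n d) &
      lplus + lminus = l].
Proof.
move=> l0 m0 ln mn _ /andP[d1 dn] hd [nm1 np1 _ hm [hn hf]] lplus lminus.
have n1 : 1 < n by lia.
have e : n * mp = m * np + 1.
  rewrite -hm -hn !mulnDl (mulnC nm mp) hf. lia.
have [q hq] : exists q, d * m = q * n + 1.
  exists ((d * m) %/ n). by rewrite {1}(divn_eq (d * m) n) hd modn_small.
have h3 : (np + d) * m = n * (mp + q).
  rewrite mulnDl hq mulnDr e (mulnC np m) (mulnC n q). lia.
have dv : n %| np + d.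
  have : n %| (np + d) * m * d by rewrite h3 -mulnA dvdn_mulr.
  rewrite -mulnA (mulnC m d) hq mulnDr muln1 dvdn_addr //.
  by rewrite mulnA dvdn_mull.
have hnp : np = n - d.
  move: dv => /dvdnP[K hK].
  have : K = 1.
    case: K hK => [|[|K]] hK //; first by lia.
    nia.
  move=> hK1; subst K. lia.
have hnm : nm = d by lia.
have hcnt : forall a b, count (fun i => (i * m) %% n < l) (iota a b) =
               countL [seq F l m n i | i <- iota a b].
  by move=> a b; rewrite /countL count_map; apply: eq_count => i; rewrite /F /=; case: ifP.
have hX : lplus = countL (Xhat l m n d).
  rewrite /Xhat -hnp -hcnt /lplus /ceil_div.
  by rewrite (countX _ _ _ _ _ _ np1 _ e (ltnW ln) hd) //; lia.
have hsum : countL (Xhat l m n d) + countL (Yhat l m n d) = l.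
  rewrite /Xhat /Yhat -!hcnt -count_cat.
  have <- : iota 0 n = iota 0 (n - d) ++ iota (n - d) d.
    have {1}-> : n = (n - d) + d by lia.
    by rewrite iotaD.
  exact: (count_full _ _ _ _ (ltnW n1) (ltnW ln) hd).
have hlm : lplus + lminus = l.
  rewrite /lplus /lminus /ceil_div.
  apply: arith; first lia.
  by rewrite -mulnDr addnC hn mulnC.
split => //; lia.
Qed.
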